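(* Let $G$ be a unicyclic graph of diameter $2$. Then $G$ is group vertex magic if and only if $G$ is the cycle $C_4$ or the cycle $C_5$.
   Context: All graphs are finite, simple and undirected. A unicyclic graph is a connected graph containing exactly one cycle. For an additive abelian group $\mathcal{A}$ with identity $0$, a map $\ell:V(G)\to\mathcal{A}\setminus\{0\}$ is an $\mathcal{A}$-vertex magic labeling if there is $\mu\in\mathcal{A}$ with $\sum_{u\in N(v)}\ell(u)=\mu$ for every vertex $v$; $G$ is $\mathcal{A}$-vertex magic if it admits such a labeling, and group vertex magic if it is $\mathcal{A}$-vertex magic for every nontrivial abelian group $\mathcal{A}$. *)

(* Defs.v *)
From mathcomp Require Import all_boot all_order all_algebra.
Set Implicit Arguments. Unset Strict Implicit. Unset Printing Implicit Defensive.
Import GRing.Theory.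

Definition simple_graph (T : finType) (e : rel T) : Prop :=
  symmetric e /\ irreflexive e.

Definition connected_graph (T : finType) (e : rel T) : Prop :=
  forall x y : T, connect e x y.

Definition is_graph_cycle (T : finType) (e : rel T) (p : seq T) : Prop :=
  [/\ 3 <= size p, uniq p & cycle e p].

Definition cycle_edges (T : finType) (p : seq T) : {set {set T}} :=
  [set [set x; next p x] | x in p].

Definition unicyclic (T : finType) (e : rel T) : Prop :=
  [/\ connected_graph e,
      exists p, is_graph_cycle e p
    & forall p q, is_graph_cycle e p -> is_graph_cycle e q ->
                  cycle_edges p = cycle_edges q].

Definition dist_le (T : finType) (e : rel T) (k : nat) (x y : T) : Prop :=
  exists p : seq T, [/\ size p <= k, path e x p & last x p = y].

Definition diameter2 (T : finType) (e : rel T) : Prop :=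
  (forall x y, dist_le e 2 x y) /\ (exists x y, ~ dist_le e 1 x y).

Definition vertex_magic_labeling (T : finType) (e : rel T) (A : zmodType)
    (l : T -> A) : Prop :=
  (forall v, l v != 0%R) /\
  exists mu : A, forall v, (\sum_(u | e v u) l u)%R = mu.

Definition A_vertex_magic (T : finType) (e : rel T) (A : zmodType) : Prop :=
  exists l : T -> A, vertex_magic_labeling e l.

Definition group_vertex_magic (T : finType) (e : rel T) : Prop :=
  forall A : zmodType, (exists a : A, a != 0%R) -> A_vertex_magic e A.

Definition cycle_adj (n : nat) (i j : 'I_n) : bool :=
  (val j == (val i).+1 %% n) || (val i == (val j).+1 %% n).

Definition is_cycle_graph (T : finType) (e : rel T) (n : nat) : Prop :=
  exists f : T -> 'I_n, bijective f /\ forall x y, e x y = cycle_adj (f x) (f y).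

(* Main.v *)
Require Import Defs.
From mathcomp Require Import all_boot all_order all_algebra zify.
Import GRing.Theory.

Lemma sum4 (A : zmodType) (a : A) (j : 'I_4) : (\sum_(i | cycle_adj j i) a = a *+ 2)%R.
Proof. rewrite big_mkcond !big_ord_recl big_ord0 /=.
case: j => [[|[|[|[|m]]]] Hm] //; rewrite /cycle_adj /= ?addr0 ?add0r //. Qed.
Lemma sum5 (A : zmodType) (a : A) (j : 'I_5) : (\sum_(i | cycle_adj j i) a = a *+ 2)%R.
Proof. rewrite big_mkcond !big_ord_recl big_ord0 /=.
case: j => [[|[|[|[|[|m]]]]] Hm] //; rewrite /cycle_adj /= ?addr0 ?add0r //. Qed.

Lemma cyc_gvm (T : finType) (e : rel T) n :
  (forall (A : zmodType) (a : A) (j : 'I_n), (\sum_(i | cycle_adj j i) a = a *+ 2)%R) ->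
  is_cycle_graph e n -> group_vertex_magic e.
Proof.
move=> Hs [f [fb fe]] A [a a0]; exists (fun _ => a); split => //.
exists (a *+ 2)%R => v.
rewrite (eq_bigl (fun u => cycle_adj (f v) (f u))); last by move=> u; rewrite fe.
by rewrite -(reindex f (onW_bij _ fb)) Hs.
Qed.

Lemma cyc_nb (T : finType) (p : seq T) v u : uniq p ->
  [set v; u] \in cycle_edges p -> u = next p v \/ u = prev p v.
Proof.
move=> up /imsetP [y yp E].
have vin : v \in [set y; next p y] by rewrite -E !inE eqxx.
have uin : u \in [set y; next p y] by rewrite -E !inE eqxx orbT.
have yin : y \in [set v; u] by rewrite E !inE eqxx.
have nin : next p y \in [set v; u] by rewrite E !inE eqxx orbT.
clear E.
case/set2P: vin => vy; subst v.
  case/set2P: uin => uy; subst u; last by left.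
  case/set2P: nin => ->; by left.
case/set2P: yin => [yv|uy]; last by subst y; right; rewrite (prev_next up).
right; rewrite (prev_next up); case/set2P: uin => // ->; by rewrite -yv.
Qed.

Arguments cyc_nb {T p v u}.

Lemma head_edge (T : finType) (x y : T) rest : [set x; y] \in cycle_edges [:: x, y & rest].
Proof. by apply/imsetP; exists x; rewrite ?mem_head // /next /= eqxx. Qed.

Lemma dist2 (T : finType) (e : rel T) x y : dist_le e 2 x y ->
  x = y \/ e x y \/ exists w, e x w /\ e w y.
Proof.
case=> [[|a [|b [|c s]]]] [] //=.
- by move=> _ _ ->; left.
- by rewrite andbT => _ H <-; right; left.
- by rewrite andbT => _ /andP [H1 H2] <-; right; right; exists a.
Qed.

Arguments dist2 {T e x y}.

Lemma dist1 (T : finType) (e : rel T) x y : x = y \/ e x y -> dist_le e 1 x y.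
Proof. by case=> [->|H]; [exists [::] | exists [:: y]; rewrite /= H]. Qed.

Ltac neqs := repeat (apply/andP; split); try done; try (rewrite eq_sym; done);
  try (match goal with ne : forall x y, _ -> is_true (x != y) |- _ =>
     solve [apply: ne; done | rewrite eq_sym; apply: ne; done] end).

Arguments dist1 {T e x y}.

Lemma edge_cyc (T : finType) (e : rel T) v a b a' :
  symmetric e -> irreflexive e -> (forall x y, dist_le e 2 x y) ->
  e v a -> e v b -> a != b -> e a a' -> a' != v ->
  exists p, is_graph_cycle e p /\ [set v; a] \in cycle_edges p.
Proof.
move=> sym irr d2 eva evb ab eaa' a'v.
have ne : forall x y, e x y -> x != y.
  by move=> x y H; apply/eqP => xy; move: H; rewrite xy irr.
have tri : forall c, e a c -> e c v -> c != a -> c != v ->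
    exists p, is_graph_cycle e p /\ [set v; a] \in cycle_edges p.
  move=> c eac ecv ca cv; exists [:: v; a; c]; split; last exact: head_edge.
  split => //=; last by rewrite eva eac ecv.
  rewrite !inE !negb_or; neqs.
case: (a' =P b) => [a'b|/eqP a'b].
  subst a'; apply: (tri b) => //; first by rewrite sym.
  by rewrite eq_sym.
case: (dist2 (d2 a' b)) => [/eqP|[|[w [ea'w ewb]]]]; first by rewrite (negbTE a'b).
- move=> ea'b.
  exists [:: v; a; a'; b]; split; last exact: head_edge.
  split => //=; last by rewrite eva eaa' ea'b sym evb.
  rewrite !inE !negb_or; neqs.
- case: (w =P v) => [wv|wv].
    by subst w; apply: (tri a') => //; rewrite eq_sym; apply: ne.
  case: (w =P a) => [wa|wa].
    subst w; apply: (tri b) => //; [by rewrite sym | by rewrite eq_sym | by rewrite eq_sym; apply: ne].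
  exists [:: v; a; a'; w; b]; split; last exact: head_edge.
  split => //=; last by rewrite eva eaa' ea'w ewb sym evb.
  move/eqP: wv => wv; move/eqP: wa => wa.
  rewrite !inE !negb_or; neqs.
Qed.


Arguments edge_cyc {T e v a b a'}.

Lemma set2_card (T : finType) (A : {set T}) a b :
  #|A| = 2 -> a \in A -> b \in A -> a != b -> A = [set a; b].
Proof.
move=> cA aA bA ab; apply/eqP; rewrite eq_sym eqEcard subUset !sub1set aA bA cA.
by rewrite cards2 ab.
Qed.

Lemma idx_next (T : finType) (L : seq T) n x : uniq L -> size L = n.+1 -> x \in L ->
  index (next L x) L = (index x L).+1 %% n.+1.
Proof.
move=> uL sL xL; rewrite next_nth xL.
case: L uL sL xL => // y0 L' uL [sL'] xL.
have : index x (y0 :: L') < n.+1 by rewrite -sL' -[(size L').+1]/(size (y0 :: L')) index_mem.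
set i := index x (y0 :: L'); rewrite ltnS leq_eqVlt => /orP [/eqP ein|ilt].
  rewrite ein nth_default ?sL' // modnn /= eqxx //.
rewrite modn_small ?ltnS //.
have -> : nth y0 L' i = nth y0 (y0 :: L') i.+1 by [].
by rewrite index_uniq //= sL' ltnS.
Qed.

Lemma idx_eq (T : finType) (L : seq T) y z : y \in L -> z \in L ->
  (y == z) = (index y L == index z L).
Proof.
move=> yL zL; apply/eqP/eqP => [->|H] //.
by rewrite -(nth_index y yL) H nth_index.
Qed.

Lemma ar (i m : nat) : i < m -> 2 < m -> ((i.+1 %% m).+1 %% m) != i.
Proof.
move=> im m3.
have md : forall k, k < m.+1 -> k %% m = if k == m then 0 else k.
  move=> k km; case: (k =P m) => [->|h]; first by rewrite modnn.
  rewrite modn_small //; lia.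
rewrite (md i.+1) ?ltnS //; case: (i.+1 =P m) => [h|h] /=.
  rewrite !modn_small //; lia.
rewrite (md i.+2); last lia.
case: (i.+2 =P m) => [h'|h'] /=; lia.
Qed.

Lemma iso_L (T : finType) (e : rel T) (L : seq T) n :
  symmetric e -> uniq L -> size L = n.+1 -> 2 < n.+1 -> (forall x, x \in L) ->
  cycle e L -> (forall v, #|[set u | e v u]| = 2) -> is_cycle_graph e n.+1.
Proof.
move=> sym uL sL n2 allL cL deg2.
have inx : forall x, index x L < n.+1 by move=> x; rewrite -sL index_mem.
have nn : forall x, next L (next L x) != x.
  move=> x; apply/negP => /eqP E.
  have : index (next L (next L x)) L = index x L by rewrite E.
  rewrite !(@idx_next _ L n _ uL sL) ?mem_next ?allL // => /eqP.
  by rewrite (negbTE (ar _ _ (inx x) n2)) // allL.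
have echar : forall x y, e x y = (y == next L x) || (x == next L y).
  move=> x y.
  have -> : (x == next L y) = (y == prev L x).
    apply/eqP/eqP => [->|->]; by rewrite ?(prev_next uL) ?(next_prev uL).
  have nx : next L x \in [set u | e x u] by rewrite inE next_cycle.
  have px : prev L x \in [set u | e x u] by rewrite inE sym prev_cycle.
  have npx : next L x != prev L x.
    apply/negP => /eqP E; move: (nn x).
    by rewrite E (next_prev uL) eqxx.
  have := @set2_card _ _ _ _ (deg2 x) nx px npx.
  move/setP => /(_ y); rewrite !inE => ->; done.
case: L uL sL allL cL echar nn inx => // y0 L' uL sL allL cL echar nn inx.
pose L := y0 :: L'.
exists (fun x => inord (index x L)); split.
  exists (fun i : 'I_n.+1 => nth y0 L i).
    by move=> x; rewrite inordK ?inx // nth_index.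
  move=> i; apply: ord_inj; rewrite inordK ?inx //.
  by rewrite index_uniq // sL.
have vi : forall x, val (inord (index x L) : 'I_n.+1) = index x L := fun x => inordK (inx x).
move=> x y; rewrite echar /cycle_adj !vi.
by rewrite !(@idx_eq _ _ _ _ (allL _) (allL _)) !(@idx_next _ L n _ uL sL) ?allL.
Qed.

Lemma nbP (T : finType) (e : rel T) x p q y :
  [set u | e x u] = [set p; q] -> e x y -> y = p \/ y = q.
Proof. by move=> E exy; apply/set2P; rewrite -E inE. Qed.

Arguments nbP {T e x p q y}.

Lemma nbI (T : finType) (e : rel T) x p q y :
  [set u | e x u] = [set p; q] -> y = p \/ y = q -> e x y.
Proof. move=> E H; have : y \in [set p; q] by apply/set2P.
by rewrite -E inE. Qed.

Arguments nbI {T e x p q y}.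

Lemma other (T : finType) (e : rel T) a v : #|[set u | e a u]| = 2 -> e a v ->
  exists a', a' != v /\ [set u | e a u] = [set v; a'].
Proof.
move=> /eqP/cards2P [p [q [pq E]]] eav.
case: (nbP E eav) => ->; first by exists q; rewrite eq_sym.
by exists p; rewrite E setUC.
Qed.

Arguments other {T e a v}.

Lemma two_reg (T : finType) (e : rel T) :
  simple_graph e -> diameter2 e -> (forall v, #|[set u | e v u]| = 2) ->
  is_cycle_graph e 4 \/ is_cycle_graph e 5.
Proof.
move=> [sym irr] [d2 [v [y0 nd]]] deg2.
have ne : forall x y, e x y -> x != y.
  by move=> x y H; apply/eqP => xy; move: H; rewrite xy irr.
have /eqP/cards2P [a [b [ab Nv]]] := deg2 v.
have eva : e v a by apply: (nbI Nv); left.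
have evb : e v b by apply: (nbI Nv); right.
have eav : e a v by rewrite sym.
have ebv : e b v by rewrite sym.
have [a' [a'v Na]] := other (deg2 a) eav.
have [b' [b'v Nb]] := other (deg2 b) ebv.
have eaa' : e a a' by apply: (nbI Na); right.
have ebb' : e b b' by apply: (nbI Nb); right.
have cover : forall x, x = v \/ x = a \/ x = b \/ x = a' \/ x = b'.
  move=> x; case: (dist2 (d2 v x)) => [<-|[/(nbP Nv) [] ->|[w [evw ewx]]]].
  - by left.
  - by right; left.
  - by right; right; left.
  case: (nbP Nv evw) => wE; subst w.
    by case: (nbP Na ewx) => ->; [left | right; right; right; left].
  by case: (nbP Nb ewx) => ->; [left | right; right; right; right].
case: (a' =P b) => [a'b|/eqP a'b].
  subst a'; exfalso; apply: nd.
  have eba : e b a by rewrite sym.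
  have b'a : b' = a.
    case: (nbP Nb eba) => // av; move: (ne _ _ eva); by rewrite av eqxx.
  by case: (cover y0) => [->|[->|[->|[->|->]]]]; apply: dist1;
    [left | right | right | right | right; rewrite b'a].
have b'a : b' != a.
  apply/eqP => b'a; subst b'.
  have eab : e a b by rewrite sym.
  case: (nbP Na eab) => bE.
    by move: (ne _ _ evb); rewrite bE eqxx.
  by move: a'b; rewrite bE eqxx.
case: (a' =P b') => [a'b'|/eqP a'b'].
  subst b'; left.
  apply: (@iso_L _ _ [:: v; a; a'; b] 3) => //.
  - rewrite /= !inE !negb_or; neqs.
  - move=> x; case: (cover x) => [->|[->|[->|[->|->]]]]; by rewrite !inE eqxx ?orbT.
  - by rewrite /= eva eaa' (sym a') ebb' ebv.
have ea'b' : e a' b'.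
  case: (dist2 (d2 a' b)) => [a'bE|[ea'b|[w [ea'w ewb]]]].
  - by move: a'b; rewrite a'bE eqxx.
  - have eba' : e b a' by rewrite sym.
    case: (nbP Nb eba') => E; first by move: a'v; rewrite E eqxx.
    by move: a'b'; rewrite E eqxx.
  - have ebw : e b w by rewrite sym.
    case: (nbP Nb ebw) => E; subst w => //.
    have eva' : e v a' by rewrite sym.
    case: (nbP Nv eva') => E.
      by move: (ne _ _ eaa'); rewrite E eqxx.
    by move: a'b; rewrite E eqxx.
right; apply: (@iso_L _ _ [:: v; a; a'; b'; b] 4) => //.
- rewrite /= !inE !negb_or; neqs.
- move=> x; case: (cover x) => [->|[->|[->|[->|->]]]]; by rewrite !inE eqxx ?orbT.
- by rewrite /= eva eaa' ea'b' (sym b') ebb' ebv.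
Qed.



Lemma cyc_avoid (T : finType) (e : rel T) s c : is_graph_cycle e s ->
  exists x y, [/\ e x y, x != c & y != c].
Proof.
case=> ss us cs; case: (boolP (c \in s)) => [cin|cnin].
  case/rot_to: cin => i s' E.
  have : cycle e (c :: s') by rewrite -E rot_cycle.
  have : uniq (c :: s') by rewrite -E rot_uniq.
  have : 3 <= size (c :: s') by rewrite -E size_rot.
  case: s' {E} => [|x [|y t]] //= _.
  rewrite !inE !negb_or => /andP [/and3P [cx cy _] _] /and3P [_ exy _].
  by exists x, y; rewrite exy eq_sym cx eq_sym cy.
move: ss us cs cnin; case: s => [|x [|y t]] //= _ _ /andP [exy _].
rewrite !inE !negb_or => /andP [cx /andP [cy _]].
by exists x, y; rewrite exy eq_sym cx eq_sym cy.
Qed.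

Arguments cyc_avoid {T e s} c.

Lemma z2 (z : 'Z_2) : z != 0%R -> z = 1%R.
Proof. by case: z => [[|[|m]] Hm] //= _; apply: val_inj. Qed.

Theorem theorem3p1 (T : finType) (e : rel T) :
  simple_graph e -> unicyclic e -> diameter2 e ->
  (group_vertex_magic e <-> is_cycle_graph e 4 \/ is_cycle_graph e 5).
Proof.
move=> sg [conn [s0 cs0] uc] diam; split; last first.
  by case=> H; [exact: (@cyc_gvm _ _ 4 sum4 H) | exact: (@cyc_gvm _ _ 5 sum5 H)].
move=> gvm.
have [sym irr] := sg.
have [d2 [x1 [y1 nd]]] := diam.
have ne : forall x y, e x y -> x != y.
  by move=> x y H; apply/eqP => xy; move: H; rewrite xy irr.
have us0 : uniq s0 by case: cs0.
have edgeE0 : forall v a b a', e v a -> e v b -> a != b -> e a a' -> a' != v ->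
    [set v; a] \in cycle_edges s0.
  move=> v a b a' eva evb ab eaa' a'v.
  have [p [cp ep]] := edge_cyc sym irr d2 eva evb ab eaa' a'v.
  by rewrite (uc s0 p cs0 cp).
have no3 : forall x c y z, c != y -> y != z -> z != c -> [set x; c] \in cycle_edges s0 ->
    [set x; y] \in cycle_edges s0 -> [set x; z] \in cycle_edges s0 -> False.
  move=> x c y z cy yz zc H1 H2 H3.
  case: (cyc_nb us0 H1) => cE; case: (cyc_nb us0 H2) => yE; case: (cyc_nb us0 H3) => zE;
    by move: cy yz zc; rewrite cE yE zE !eqxx.
have other2 : forall a v, 1 < #|[set u | e a u]| -> exists a', e a a' /\ a' != v.
  move=> a v /card_gt1P [p [q [pin qin pq]]]; rewrite !inE in pin qin.
  case: (p =P v) => [pv|/eqP pv]; last by exists p.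
  by exists q; split => //; rewrite -pv eq_sym.
case: (boolP [exists v, #|[set u | e v u]| <= 1]) => [/existsP [p degp]|/existsPn deg].
  have [q qp] : exists q, q != p.
    case: (x1 =P y1) => [xy|/eqP xy].
      by exfalso; apply: nd; apply: dist1; left.
    case: (x1 =P p) => [xp|/eqP xp]; last by exists x1.
    by exists y1; rewrite -xp eq_sym.
  have [c epc] : exists c, e p c.
    case/connectP: (conn p q) => [[|c r]] /=; first by move=> _ qE; move: qp; rewrite qE eqxx.
    by case/andP => epc _ _; exists c.
  have pc : forall y, e p y -> y = c.
    move=> y epy; have cin : c \in [set u | e p u] by rewrite inE.
    have yin : y \in [set u | e p u] by rewrite inE.
    have := (card_le1P degp) c cin y; rewrite yin => /esym; rewrite inE => /eqP.
    done.
  have Np : [set u | e p u] = [set c].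
    apply/setP => y; rewrite !inE; apply/idP/eqP => [/pc //|->//].
  have star : forall x, x != c -> e c x.
    move=> x xc; case: (dist2 (d2 p x)) => [<-|[/pc xE|[w [epw ewx]]]].
    - by rewrite sym.
    - by move: xc; rewrite xE eqxx.
    - by rewrite -(pc w epw).
  have [x [y [exy xc yc]]] := cyc_avoid c cs0.
  have [l [lnz [mu Hmu]]] := gvm _ (ex_intro _ (1%R : 'Z_2) isT).
  have l1 : forall u, l u = 1%R by move=> u; apply: z2.
  have degZ : forall v, (#|[set u | e v u]|%:R : 'Z_2)%R = mu.
    move=> v; rewrite -(Hmu v) (eq_bigr (fun _ => 1%R)) //.
    rewrite (eq_bigl (fun u => u \in [set u | e v u])) => [|u]; last by rewrite inE.
    by rewrite sumr_const.
  have odd3 : 2 < #|[set u | e x u]|.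
    have := degZ x; rewrite -(degZ p) Np cards1 => /(congr1 (@nat_of_ord _)).
    rewrite val_Zp_nat //= => oddx.
    have cin : c \in [set u | e x u] by rewrite inE sym star.
    have yin : y \in [set u | e x u] by rewrite inE.
    have : 1 < #|[set u | e x u]| by apply/card_gt1P; exists c, y; rewrite eq_sym yc.
    rewrite leq_eqVlt => /orP [/eqP H|//]; by move: oddx; rewrite -H.
  have [z zin] : exists z, z \in [set u | e x u] :\: [set c; y].
    apply/card_gt0P; rewrite cardsD.
    have -> : [set u | e x u] :&: [set c; y] = [set c; y].
      apply/setIidPr; rewrite subUset !sub1set !inE exy sym star //.
    rewrite cards2 eq_sym yc; by rewrite subn_gt0.
  move: zin; rewrite !inE negb_or => /andP [/andP [zc zy] exz].
  have px : p != x.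
    apply/eqP => pxE; subst x; move: yc; by rewrite (pc y exy) eqxx.
  exfalso; apply: (no3 x c y z) => //; [by rewrite eq_sym | by rewrite eq_sym | | |].
  - by apply: (edgeE0 x c y p) => //; [rewrite sym star | rewrite eq_sym | rewrite sym].
  - by apply: (edgeE0 x y c c) => //; [rewrite sym star | rewrite sym star | rewrite eq_sym].
  - by apply: (edgeE0 x z c c) => //; [rewrite sym star | rewrite sym star | rewrite eq_sym].
have deg' : forall v, 1 < #|[set u | e v u]| by move=> v; rewrite ltnNge deg.
have deg2 : forall v, #|[set u | e v u]| = 2.
  move=> v; have := deg v; rewrite -ltnNge => d1.
  apply/eqP; rewrite eqn_leq d1 andbT leqNgt; apply/negP.
  move/card_gt2P => [a [b [c [[ain bin cin] [ab bc ca]]]]]; rewrite !inE in ain bin cin.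
  have [a' [eaa' a'v]] := other2 a v (deg' _).
  have [b' [ebb' b'v]] := other2 b v (deg' _).
  have [c' [ecc' c'v]] := other2 c v (deg' _).
  apply: (no3 v a b c ab bc ca).
  - exact: (edgeE0 v a b a').
  - exact: (edgeE0 v b c b').
  - by apply: (edgeE0 v c a c') => //; rewrite eq_sym.
exact: two_reg.
Qed.
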